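(* Let $m\ge2$ be an integer and let $A$ be a left brace with $A^{(3)}=A^{m+1}=\{0\}$. Let $a\in A$, define $a_1=a$ and $a_{j+1}=a*a_j$ for $j\ge1$, and let $S$ be the subbrace of $A$ generated by $a$. For $1\le r\le m$ let \[S_r=\Bigl\{\sum_{k=r}^m t_ka_k\;\Big|\; t_k\in\mathbb{Z},\ r\le k\le m\Bigr\}.\] Then $S^r=S_r$ for all $1\le r\le m$, and $S^r=\{0\}$ for $r\ge m+1$. Here $S^r$ is computed inside the left brace $S$.
   Context: A left brace $(A,+,\cdot)$ is a set $A$ with two binary operations such that $(A,+)$ is an abelian group, $(A,\cdot)$ is a group, and $a(b+c)=ab-a+ac$ for all $a,b,c\in A$. In a left brace, $a*b=-a+ab-b$. For subsets $L,M\subseteq A$, $L*M$ is the subgroup of $(A,+)$ generated by $\{l*m\mid l\in L,m\in M\}$. Set $A^{(1)}=A$, $A^{(r+1)}=A^{(r)}*A$, and $A^1=A$, $A^{r+1}=A*A^r$ for $r\ge1$. A subbrace is a subset that is a subgroup of both $(A,+)$ and $(A,\cdot)$ (hence itself a left brace); the subbrace generated by $a$ is the intersection of all subbraces containing $a$. *)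

(* Defs.v *)
From HB Require Import structures.
From mathcomp Require Import all_boot all_order all_algebra.
Set Implicit Arguments. Unset Strict Implicit. Unset Printing Implicit Defensive.
Import GRing.Theory.
Local Open Scope ring_scope.

Record left_brace (A : zmodType) := LeftBrace {
  bmul : A -> A -> A;
  bid : A;
  binv : A -> A;
  bmulA : forall x y z, bmul x (bmul y z) = bmul (bmul x y) z;
  bmul1x : forall x, bmul bid x = x;
  bmulx1 : forall x, bmul x bid = x;
  bmulVx : forall x, bmul (binv x) x = bid;
  bmulxV : forall x, bmul x (binv x) = bid;
  bdistr : forall a b c, bmul a (b + c) = bmul a b - a + bmul a c
}.

Section Brace.
Variables (A : zmodType) (B : left_brace A).

Definition bstar (a b : A) : A := - a + bmul B a b - b.

Inductive addgen (X : A -> Prop) : A -> Prop :=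
  | addgen_gen x : X x -> addgen X x
  | addgen_0 : addgen X 0
  | addgen_sub x y : addgen X x -> addgen X y -> addgen X (x - y).

Definition starset (L M : A -> Prop) : A -> Prop :=
  addgen (fun x => exists l m, L l /\ M m /\ x = bstar l m).

Definition fullset : A -> Prop := fun _ => True.

(* right series A^(r) (r >= 1; index 0 is the same as 1 by convention) *)
Fixpoint rser (n : nat) : A -> Prop :=
  match n with
  | 0 => fullset
  | 1 => fullset
  | S ((S _) as k) => starset (rser k) fullset
  end.

(* left series of the sub-brace T (T^1 = T, T^(r+1) = T * T^r),
   computed inside T; T = fullset gives A^r *)
Fixpoint lser (T : A -> Prop) (n : nat) : A -> Prop :=
  match n with
  | 0 => T
  | 1 => T
  | S ((S _) as k) => starset T (lser T k)
  end.

Definition is_subbrace (T : A -> Prop) : Prop :=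
  T 0 /\ (forall x y, T x -> T y -> T (x - y)) /\
  T (bid B) /\ (forall x y, T x -> T y -> T (bmul B x y)) /\
  (forall x, T x -> T (binv B x)).

Definition gen_subbrace (a : A) : A -> Prop :=
  fun x => forall T, is_subbrace T -> T a -> T x.

(* a_1 = a, a_(j+1) = a * a_j  (index 0 is junk, equal to a) *)
Fixpoint aseq (a : A) (n : nat) : A :=
  match n with
  | 0 => a
  | 1 => a
  | S ((S _) as k) => bstar a (aseq a k)
  end.

Definition Sr (a : A) (m r : nat) : A -> Prop :=
  fun x => exists t : nat -> int, x = \sum_(r <= k < m.+1) (aseq a k) *~ t k.

End Brace.

(* Main.v *)
Require Import Defs.
From mathcomp Require Import all_boot all_order all_algebra.
Import GRing.Theory.
Local Open Scope ring_scope.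

Section Proof14.
Variables (A : zmodType) (B : left_brace A).

Local Notation mul := (bmul B).
Definition lam (x y : A) : A := - x + mul x y.

Lemma mulx0 x : mul x 0 = x.
Proof.
have := bdistr B x 0 0; rewrite addr0 => h.
apply/eqP; rewrite -subr_eq0; apply/eqP; apply: (addIr (mul x 0)).
by rewrite add0r -h.
Qed.

Lemma bid0 : bid B = 0.
Proof. by rewrite -[RHS](bmul1x B) mulx0. Qed.

Lemma lamD x y z : lam x (y + z) = lam x y + lam x z.
Proof. by rewrite /lam bdistr !addrA. Qed.

Lemma lam0 x : lam x 0 = 0.
Proof. by rewrite /lam mulx0 addNr. Qed.

Lemma lamN x y : lam x (- y) = - lam x y.
Proof. by apply/eqP; rewrite -addr_eq0 -lamD addNr lam0. Qed.

Lemma lamB x y z : lam x (y - z) = lam x y - lam x z.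
Proof. by rewrite lamD lamN. Qed.

Lemma mul_lam x y : mul x y = x + lam x y.
Proof. by rewrite /lam addrA addrN add0r. Qed.

Lemma lamM x y z : lam (mul x y) z = lam x (lam y z).
Proof.
rewrite -[lam y z]/(- y + mul y z) lamD lamN /lam -bmulA !opprD opprK.
by rewrite !addrA [x - _]addrC addrK.
Qed.

Lemma lam0x z : lam 0 z = z.
Proof. by rewrite /lam -bid0 bmul1x bid0 oppr0 add0r. Qed.

Lemma lamVK x z : lam (binv B x) (lam x z) = z.
Proof. by rewrite -lamM bmulVx bid0 lam0x. Qed.
Lemma lamKV x z : lam x (lam (binv B x) z) = z.
Proof. by rewrite -lamM bmulxV bid0 lam0x. Qed.

Lemma bstar_lam x y : bstar B x y = lam x y - y.
Proof. by []. Qed.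

Hypothesis h3 : forall x, rser B 3 x <-> x = 0.

Lemma lam_star x y z : lam (bstar B x y) z = z.
Proof.
have : bstar B (bstar B x y) z = 0.
  apply/h3; apply: addgen_gen; exists (bstar B x y), z; split=> //.
  by apply: addgen_gen; exists x, y.
by rewrite bstar_lam => /eqP; rewrite subr_eq0 => /eqP.
Qed.

Lemma lam_add x y w : lam (x + y) w = lam x (lam y w).
Proof.
set y' := lam (binv B x) y.
have hy : lam x y' = y by rewrite lamKV.
have -> : x + y = mul x y' by rewrite mul_lam hy.
rewrite lamM; congr (lam x _).
set k := bstar B x y'.
have -> : y = k + y' by rewrite /k bstar_lam hy subrK.
have -> : k + y' = mul k y' by rewrite mul_lam lam_star.
by rewrite lamM lam_star.
Qed.


Lemma subrBB (p q x y : A) : p - q - (x - y) = (p - x) - (q - y).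
Proof. by rewrite !opprD !opprK addrACA. Qed.

Lemma bstarB x y z : bstar B x (y - z) = bstar B x y - bstar B x z.
Proof. by rewrite !bstar_lam lamB !opprD !opprK addrACA. Qed.

Lemma bstar0 x : bstar B x 0 = 0.
Proof. by rewrite bstar_lam lam0 subrr. Qed.

Lemma lam_lamN x z : lam (- x) (lam x z) = z.
Proof. by rewrite -lam_add addNr lam0x. Qed.
Lemma lam_Nlam x z : lam x (lam (- x) z) = z.
Proof. by rewrite -lam_add addrN lam0x. Qed.

Variables (m : nat) (a : A).
Hypothesis hm : (2 <= m)%N.
Hypothesis hm1 : forall x, lser B (@fullset A) m.+1 x <-> x = 0.

Local Notation as_ := (aseq B a).
Local Notation V := (Sr B a m).

Lemma aseqS k : as_ k.+2 = bstar B a (as_ k.+1).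
Proof. by []. Qed.

Lemma aseq_lser k : lser B (@fullset A) k.+1 (as_ k.+1).
Proof.
elim: k => [|k IH] //=.
by apply: addgen_gen; exists a, (as_ k.+1).
Qed.

Lemma aseq_big k : (m.+1 <= k)%N -> as_ k = 0.
Proof.
elim: k => [//|k IH].
rewrite leq_eqVlt => /orP [/eqP <-|]; first by apply/hm1/aseq_lser.
rewrite ltnS => hk; case: k hk IH => [//|k] hk IH.
by rewrite aseqS IH // bstar0.
Qed.

Lemma V0 r : V r 0.
Proof. by exists (fun _ => 0); rewrite big1 // => i _; rewrite mulr0z. Qed.

Lemma VB r x y : V r x -> V r y -> V r (x - y).
Proof.
move=> [t1 ->] [t2 ->]; exists (fun k => t1 k - t2 k).
by rewrite -sumrB; apply: eq_bigr => i _; rewrite mulrzBr.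
Qed.

Lemma VN r x : V r x -> V r (- x).
Proof. by move=> h; rewrite -sub0r; apply: VB => //; apply: V0. Qed.

Lemma VD r x y : V r x -> V r y -> V r (x + y).
Proof. by move=> hx hy; rewrite -[y]opprK; apply: VB => //; apply: VN. Qed.

Lemma Vgen r k : (r <= k)%N -> V r (as_ k).
Proof.
move=> hrk; case: (leqP k m) => hkm; last by rewrite aseq_big //; apply: V0.
exists (fun i => (i == k)%:Z).
rewrite (bigD1_seq k) /=; last by rewrite iota_uniq.
  rewrite eqxx mulr1z big1 ?addr0 // => i /negbTE ->; by rewrite mulr0z.
by rewrite mem_index_iota hrk ltnS.
Qed.

Lemma Vind (P : A -> Prop) r :
  P 0 -> (forall x y, P x -> P y -> P (x - y)) ->
  (forall k, (r <= k <= m)%N -> P (as_ k)) -> forall x, V r x -> P x.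
Proof.
move=> P0 PB Pg x [t ->].
have PN z : P z -> P (- z) by move=> hz; rewrite -sub0r; apply: PB.
have PD z w : P z -> P w -> P (z + w) by move=> hz hw; rewrite -[w]opprK; apply: PB => //; apply: PN.
have PZ z (n : int) : P z -> P (z *~ n).
  move=> hz; case: n => j.
    by rewrite -pmulrn; elim: j => [|j IH]; rewrite ?mulr0n // mulrS; apply: PD.
  rewrite NegzE mulrNz -pmulrn; apply: PN.
  by elim: j.+1 => [|i IH]; rewrite ?mulr0n // mulrS; apply: PD.
rewrite big_nat_cond; apply: big_ind => // i /andP [/andP [h1 h2] _].
by apply: PZ; apply: Pg; rewrite h1 -ltnS h2.
Qed.

Lemma Vmono r s x : (r <= s)%N -> V s x -> V r x.
Proof.
move=> hrs; apply: Vind; [exact: V0 | exact: VB |].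
by move=> k /andP [hk _]; apply: Vgen; apply: leq_trans hk.
Qed.

Lemma Vbig r x : (m.+1 <= r)%N -> V r x <-> x = 0.
Proof.
move=> hr; split; last by move=> ->; apply: V0.
by move=> [t ->]; rewrite big_geq.
Qed.


Lemma bstar_V r y : (1 <= r)%N -> V r y -> V r.+1 (bstar B a y).
Proof.
move=> hr; move: y; apply: Vind.
- by rewrite bstar0; apply: V0.
- by move=> x y hx hy; rewrite bstarB; apply: VB.
move=> k /andP [hk _]; case: k hk => [|k] hk; first by move: (leq_trans hr hk).
by rewrite -aseqS; apply: Vgen.
Qed.

Lemma lamNa_step k : lam (- a) (as_ k.+1) = as_ k.+1 - lam (- a) (as_ k.+2).
Proof. by rewrite aseqS bstar_lam lamB lam_lamN opprB addrC subrK. Qed.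

Lemma lamNa_gen d k : (m.+1 <= k.+1 + d)%N -> V k.+1 (lam (- a) (as_ k.+1)).
Proof.
elim: d k => [|d IH] k hk.
  by rewrite addn0 in hk; rewrite aseq_big // lam0; apply: V0.
rewrite lamNa_step; apply: VB; first by apply: Vgen.
apply: (Vmono _ _ _ (leqnSn k.+1)); apply: IH; by rewrite addSnnS.
Qed.

Lemma lamNa_V r w : (1 <= r)%N -> V r w -> V r.+1 (lam (- a) w - w).
Proof.
move=> hr; move: w; apply: Vind.
- by rewrite lam0 subrr; apply: V0.
- by move=> x y hx hy; rewrite lamB subrBB; apply: VB.
move=> k /andP [hk _]; case: k hk => [|k] hk; first by move: (leq_trans hr hk).
rewrite lamNa_step addrAC subrr add0r; apply: VN.
apply: (Vmono r.+1 k.+2) => //; apply: (lamNa_gen m).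
by rewrite addSn ltnS leq_addl.
Qed.

Lemma core_pos r y (n : nat) : (1 <= r)%N -> V r y -> V r.+1 (lam (a *+ n) y - y).
Proof.
move=> hr hy; elim: n => [|n IH]; first by rewrite mulr0n lam0x subrr; apply: V0.
rewrite mulrS lam_add; set w := lam (a *+ n) y.
have hw : V r w by rewrite -(subrK y w); apply: VD => //; apply: (Vmono _ _ _ (leqnSn r)).
have -> : lam a w - y = bstar B a w + (w - y) by rewrite bstar_lam addrA subrK.
by apply: VD => //; apply: bstar_V.
Qed.

Lemma core_neg r y (n : nat) : (1 <= r)%N -> V r y -> V r.+1 (lam (- (a *+ n)) y - y).
Proof.
move=> hr hy; elim: n => [|n IH]; first by rewrite mulr0n oppr0 lam0x subrr; apply: V0.
rewrite mulrS opprD lam_add; set w := lam (- (a *+ n)) y.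
have hw : V r w by rewrite -(subrK y w); apply: VD => //; apply: (Vmono _ _ _ (leqnSn r)).
have -> : lam (- a) w - y = (lam (- a) w - w) + (w - y) by rewrite addrA subrK.
by apply: VD => //; apply: lamNa_V.
Qed.

Lemma core r y (n : int) : (1 <= r)%N -> V r y -> V r.+1 (lam (a *~ n) y - y).
Proof.
move=> hr hy; case: n => j; first by rewrite -pmulrn; apply: core_pos.
by rewrite NegzE mulrNz -pmulrn; apply: core_neg.
Qed.

Lemma core' r y (n : int) : (1 <= r)%N -> V r y -> V r (lam (a *~ n) y).
Proof.
move=> hr hy; rewrite -(subrK y (lam _ _)); apply: VD => //.
by apply: (Vmono _ _ _ (leqnSn r)); apply: core.
Qed.

Lemma lamz_inv (n : int) z : lam (a *~ n) (lam (a *~ (- n)) z) = z.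
Proof. by rewrite -lam_add mulrNz addrN lam0x. Qed.

Lemma Vlam x : V 1 x -> exists n : int, forall z, lam x z = lam (a *~ n) z.
Proof.
move: x; apply: Vind.
- by exists 0 => z; rewrite mulr0z.
- move=> x1 y1 [n1 h1] [n2 h2]; exists (n1 - n2) => z.
  by rewrite lam_add -{1}(lamz_inv n2 z) -h2 lam_lamN h1 -lam_add -mulrzDr.
move=> k /andP [hk _]; case: k hk => [//|[|k]] _.
  by exists 1 => z; rewrite mulr1z.
by exists 0 => z; rewrite mulr0z lam0x aseqS lam_star.
Qed.


Lemma star_V r x y : (1 <= r)%N -> V 1 x -> V r y -> V r.+1 (bstar B x y).
Proof.
move=> hr hx hy; have [n hn] := Vlam _ hx.
by rewrite bstar_lam hn; apply: core.
Qed.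

Lemma V1_sub : is_subbrace B (V 1).
Proof.
split; first exact: V0.
split; first exact: VB.
split; first by rewrite bid0; apply: V0.
split.
  move=> x y hx hy; rewrite mul_lam; apply: VD => //.
  by have [n ->] := Vlam _ hx; apply: core'.
move=> x hx; have [n hn] := Vlam _ hx.
have e1 : lam x (binv B x) = - x.
  by apply/eqP; rewrite -addr_eq0 addrC -mul_lam bmulxV bid0.
have e2 : binv B x = lam (binv B x) (- x) by rewrite -e1 lamVK.
have e3 u : lam (binv B x) u = lam (a *~ (- n)) u.
  by rewrite -{1}(lamz_inv n u) -hn lamVK.
by rewrite e2 e3; apply: core' => //; apply: VN.
Qed.

Local Notation G := (gen_subbrace B a).

Lemma G_aseq k : G (as_ k.+1).
Proof.
elim: k => [|k IH] T hT ha //.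
have [T0 [TB [_ [TM _]]]] := hT.
have -> : as_ k.+2 = mul a (as_ k.+1) - a - as_ k.+1.
  by rewrite aseqS /bstar [- a + _]addrC.
by apply: (TB); [apply: (TB); [apply: (TM); [|apply: IH]|]|apply: IH].
Qed.

Lemma G_V x : G x <-> V 1 x.
Proof.
split; first by move=> hx; apply: hx; [exact: V1_sub | exact: (Vgen 1 1 (leqnn 1))].
move: x; apply: Vind.
- by move=> T [T0 _].
- by move=> x y hx hy T hT ha; have [_ [TB _]] := hT; apply: TB; [apply: hx|apply: hy].
by move=> [|k] //; rewrite andbC => _; apply: G_aseq.
Qed.

Lemma lserG r x : lser B G r.+1 x <-> V r.+1 x.
Proof.
elim: r x => [|r IH] x; first exact: G_V.
change (starset B G (lser B G r.+1) x <-> V r.+2 x); split.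
  elim=> [z [l [y [hl [hy ->]]]]| |z w _ hz _ hw].
  - by apply: star_V => //; [apply/G_V | apply/IH].
  - exact: V0.
  - exact: VB.
move: x; apply: Vind; [exact: addgen_0 | by move=> ? ? ? ?; apply: addgen_sub |].
move=> [|[|k]] // /andP [hk _]; apply: addgen_gen; exists a, (as_ k.+1); split.
  by apply: (G_aseq 0).
by split => //; apply/IH; apply: Vgen.
Qed.

End Proof14.

Theorem mainTheorem14 (A : zmodType) (B : left_brace A) (m : nat) (hm : (2 <= m)%N)
  (h3 : forall x, rser B 3 x <-> x = 0)
  (hm1 : forall x, lser B (@fullset A) m.+1 x <-> x = 0)
  (a : A) :
  (forall r : nat, (1 <= r <= m)%N ->
     forall x, lser B (gen_subbrace B a) r x <-> Sr B a m r x) /\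
  (forall r : nat, (m.+1 <= r)%N ->
     forall x, lser B (gen_subbrace B a) r x <-> x = 0).
Proof.
split.
  by move=> [|r] // _ x; apply: lserG.
move=> [|r] // hr x; apply: iff_trans; first by apply: lserG.
by apply: Vbig.
Qed.
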